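(* Let $\mathbf K$ be an M$\Delta$C generated as a thick subcategory by a single object $G$, and assume that every object of $\mathbf K$ is left dualizable or that every object of $\mathbf K$ is right dualizable. Then $\operatorname{Spc}\mathbf K$ is a Noetherian topological space if and only if the finitely generated thick ideals of $\mathbf K$ satisfy the descending chain condition.
   Context: M$\Delta$C: triangulated category with monoidal structure $(\otimes,\mathbf 1)$, $\otimes$ exact in each variable. Thick ideal: full triangulated subcategory closed under summands and two-sided tensoring; finitely generated thick ideal: $\langle A_1,\dots,A_n\rangle$, the smallest thick ideal containing finitely many objects. Prime ideal: proper thick ideal $\mathbf P$ with $\mathbf I\otimes\mathbf J\subseteq\mathbf P\Rightarrow\mathbf I\subseteq\mathbf P$ or $\mathbf J\subseteq\mathbf P$. $\operatorname{Spc}\mathbf K$: set of primes with closed sets the intersections of $V(A)=\{\mathbf P:A\notin\mathbf P\}$. *)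

(* Defs.v *)
From mathcomp Require Import all_boot all_order all_algebra.
Set Implicit Arguments. Unset Strict Implicit. Unset Printing Implicit Defensive.
Import GRing.Theory.
Local Open Scope ring_scope.

Record MDCData := {
  obj : Type;
  hom : obj -> obj -> zmodType;
  idm : forall A, hom A A;
  comp : forall A B C, hom B C -> hom A B -> hom A C;
  sh : obj -> obj;
  shm : forall A B, hom A B -> hom (sh A) (sh B);
  dist : forall X Y Z, hom X Y -> hom Y Z -> hom Z (sh X) -> Prop;
  tens : obj -> obj -> obj;
  tensm : forall A A' B B', hom A A' -> hom B B' -> hom (tens A B) (tens A' B');
  unit : obj;
  assoc : forall A B C, hom (tens (tens A B) C) (tens A (tens B C));
  associ : forall A B C, hom (tens A (tens B C)) (tens (tens A B) C);
  lunit : forall A, hom (tens unit A) A;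
  luniti : forall A, hom A (tens unit A);
  runit : forall A, hom (tens A unit) A;
  runiti : forall A, hom A (tens A unit)
}.

Arguments hom {_} _ _.
Arguments idm {_} _.
Arguments comp {_ _ _ _} _ _.
Arguments sh {_} _.
Arguments shm {_ _ _} _.
Arguments dist {_ _ _ _} _ _ _.
Arguments tens {_} _ _.
Arguments tensm {_ _ _ _ _} _ _.
Arguments unit {_}.
Arguments assoc {_} _ _ _.
Arguments associ {_} _ _ _.
Arguments lunit {_} _.
Arguments luniti {_} _.
Arguments runit {_} _.
Arguments runiti {_} _.

Notation "g \oc f" := (comp g f) (at level 40, left associativity).

Section MDCDefs.
Variable K : MDCData.
Local Notation obj := (obj K).

Definition is_iso (A B : obj) (f : hom A B) : Prop :=
  exists g : hom B A, g \oc f = idm A /\ f \oc g = idm B.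

Definition is_zero_obj (Z : obj) : Prop := idm Z = 0.

Definition is_biproduct (X A B : obj) : Prop :=
  exists (i1 : hom A X) (p1 : hom X A) (i2 : hom B X) (p2 : hom X B),
    [/\ p1 \oc i1 = idm A, p2 \oc i2 = idm B, p1 \oc i2 = 0, p2 \oc i1 = 0
      & i1 \oc p1 + i2 \oc p2 = idm X].

Definition preadditive_axioms : Prop :=
  [/\ (forall (A B C D : obj) (h : hom C D) (g : hom B C) (f : hom A B),
         h \oc (g \oc f) = (h \oc g) \oc f),
      (forall (A B : obj) (f : hom A B), idm B \oc f = f),
      (forall (A B : obj) (f : hom A B), f \oc idm A = f),
      (forall (A B C : obj) (g g' : hom B C) (f : hom A B),
         (g + g') \oc f = g \oc f + g' \oc f)
    & (forall (A B C : obj) (g : hom B C) (f f' : hom A B),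
         g \oc (f + f') = g \oc f + g \oc f')].

Definition additive_axioms : Prop :=
  (exists Z : obj, is_zero_obj Z) /\ (forall A B : obj, exists X, is_biproduct X A B).

Definition shift_axioms : Prop :=
  [/\ (forall A : obj, shm (idm A) = idm (sh A)),
      (forall (A B C : obj) (g : hom B C) (f : hom A B), shm (g \oc f) = shm g \oc shm f),
      (forall (A B : obj) (f f' : hom A B), shm (f + f') = shm f + shm f'),
      (forall A B : obj, bijective (@shm K A B))
    & (forall Y : obj, exists (X : obj) (f : hom (sh X) Y), is_iso f)].

Definition tri_iso (X Y Z : obj) (f : hom X Y) (g : hom Y Z) (h : hom Z (sh X))
    (X' Y' Z' : obj) (f' : hom X' Y') (g' : hom Y' Z') (h' : hom Z' (sh X')) : Prop :=
  exists (a : hom X X') (b : hom Y Y') (c : hom Z Z'),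
    [/\ is_iso a, is_iso b, is_iso c &
        [/\ b \oc f = f' \oc a, c \oc g = g' \oc b & shm a \oc h = h' \oc c]].

Definition TR1 : Prop :=
  [/\ (forall (X Z : obj), is_zero_obj Z -> dist (idm X) (0 : hom X Z) (0 : hom Z (sh X))),
      (forall (X Y Z : obj) (f : hom X Y) (g : hom Y Z) (h : hom Z (sh X))
              (X' Y' Z' : obj) (f' : hom X' Y') (g' : hom Y' Z') (h' : hom Z' (sh X')),
         dist f g h -> tri_iso f g h f' g' h' -> dist f' g' h')
    & (forall (X Y : obj) (f : hom X Y),
         exists (Z : obj) (g : hom Y Z) (h : hom Z (sh X)), dist f g h)].

Definition TR2 : Prop :=
  forall (X Y Z : obj) (f : hom X Y) (g : hom Y Z) (h : hom Z (sh X)),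
    dist f g h <-> dist g h (- shm f).

Definition TR3 : Prop :=
  forall (X Y Z : obj) (f : hom X Y) (g : hom Y Z) (h : hom Z (sh X))
         (X' Y' Z' : obj) (f' : hom X' Y') (g' : hom Y' Z') (h' : hom Z' (sh X'))
         (a : hom X X') (b : hom Y Y'),
    dist f g h -> dist f' g' h' -> b \oc f = f' \oc a ->
    exists c : hom Z Z', c \oc g = g' \oc b /\ shm a \oc h = h' \oc c.

(* TR4: octahedral axiom (Stacks Project, Def. 13.3.2) *)
Definition TR4 : Prop :=
  forall (X Y Z : obj) (f : hom X Y) (g : hom Y Z)
         (Q1 Q2 Q3 : obj)
         (p1 : hom Y Q1) (d1 : hom Q1 (sh X))
         (p2 : hom Z Q2) (d2 : hom Q2 (sh X))
         (p3 : hom Z Q3) (d3 : hom Q3 (sh Y)),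
    dist f p1 d1 -> dist (g \oc f) p2 d2 -> dist g p3 d3 ->
    exists (a : hom Q1 Q2) (b : hom Q2 Q3),
      [/\ dist a b (shm p1 \oc d3),
          a \oc p1 = p2 \oc g, d2 \oc a = d1,
          b \oc p2 = p3 & d3 \oc b = shm f \oc d2].

Definition triangulated_axioms : Prop :=
  [/\ preadditive_axioms, additive_axioms, shift_axioms, TR1 & [/\ TR2, TR3 & TR4]].

Definition monoidal_axioms : Prop :=
  [/\
      (forall A B : obj, tensm (idm A) (idm B) = idm (tens A B)),
      (forall (A A' A'' B B' B'' : obj) (f : hom A A') (f' : hom A' A'')
              (g : hom B B') (g' : hom B' B''),
         tensm (f' \oc f) (g' \oc g) = tensm f' g' \oc tensm f g),
      (forall (A A' B B' C C' : obj) (f : hom A A') (g : hom B B') (h : hom C C'),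
         assoc A' B' C' \oc tensm (tensm f g) h = tensm f (tensm g h) \oc assoc A B C)
    & [/\
      (forall (A A' : obj) (f : hom A A'), lunit A' \oc tensm (idm unit) f = f \oc lunit A),
      (forall (A A' : obj) (f : hom A A'), runit A' \oc tensm f (idm unit) = f \oc runit A),
      [/\ (forall A B C : obj, associ A B C \oc assoc A B C = idm _ /\ assoc A B C \oc associ A B C = idm _),
          (forall A : obj, luniti A \oc lunit A = idm _ /\ lunit A \oc luniti A = idm _)
        & (forall A : obj, runiti A \oc runit A = idm _ /\ runit A \oc runiti A = idm _)],
      (forall A B C D : obj,
         assoc A B (tens C D) \oc assoc (tens A B) C D
         = tensm (idm A) (assoc B C D) \oc assoc A (tens B C) D \oc tensm (assoc A B C) (idm D))
    &
      (forall A B : obj,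
         tensm (idm A) (lunit B) \oc assoc A unit B = tensm (runit A) (idm B))]].

Definition tensor_exact_axioms : Prop :=
  [/\ (forall (A A' B B' : obj) (f f' : hom A A') (g : hom B B'),
         tensm (f + f') g = tensm f g + tensm f' g),
      (forall (A A' B B' : obj) (f : hom A A') (g g' : hom B B'),
         tensm f (g + g') = tensm f g + tensm f g'),
      (forall A : obj, exists theta : forall B : obj, hom (tens A (sh B)) (sh (tens A B)),
         [/\ (forall B, is_iso (theta B)),
             (forall (B B' : obj) (f : hom B B'),
                theta B' \oc tensm (idm A) (shm f) = shm (tensm (idm A) f) \oc theta B)
           & (forall (X Y Z : obj) (f : hom X Y) (g : hom Y Z) (h : hom Z (sh X)),
                dist f g h ->
                dist (tensm (idm A) f) (tensm (idm A) g) (theta X \oc tensm (idm A) h))])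
    &
      (forall A : obj, exists theta : forall B : obj, hom (tens (sh B) A) (sh (tens B A)),
         [/\ (forall B, is_iso (theta B)),
             (forall (B B' : obj) (f : hom B B'),
                theta B' \oc tensm (shm f) (idm A) = shm (tensm f (idm A)) \oc theta B)
           & (forall (X Y Z : obj) (f : hom X Y) (g : hom Y Z) (h : hom Z (sh X)),
                dist f g h ->
                dist (tensm f (idm A)) (tensm g (idm A)) (theta X \oc tensm h (idm A)))])].

Definition is_MDC : Prop :=
  [/\ triangulated_axioms, monoidal_axioms & tensor_exact_axioms].

Definition dual_pair (L R : obj) : Prop :=
  exists (ev : hom (tens L R) unit) (coev : hom unit (tens R L)),
    runit R \oc tensm (idm R) ev \oc assoc R L R \oc tensm coev (idm R) \oc luniti R
      = idm R /\
    lunit L \oc tensm ev (idm L) \oc associ L R L \oc tensm (idm L) coev \oc runiti L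
      = idm L.

Definition left_dualizable (R : obj) : Prop := exists L, dual_pair L R.
Definition right_dualizable (L : obj) : Prop := exists R, dual_pair L R.

Definition thick_subcat (I : obj -> Prop) : Prop :=
  [/\ (forall Z : obj, is_zero_obj Z -> I Z),
      (forall (X Y : obj) (f : hom X Y), is_iso f -> I X -> I Y),
      (forall X : obj, I X <-> I (sh X)),
      (forall (X Y Z : obj) (f : hom X Y) (g : hom Y Z) (h : hom Z (sh X)),
         dist f g h -> [/\ (I X -> I Y -> I Z), (I X -> I Z -> I Y) & (I Y -> I Z -> I X)])
    & (forall X A B : obj, is_biproduct X A B -> I X -> I A)].

Definition thick_ideal (I : obj -> Prop) : Prop :=
  thick_subcat I /\ (forall A X : obj, I X -> I (tens A X) /\ I (tens X A)).

Definition thick_closure (S : obj -> Prop) (X : obj) : Prop :=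
  forall I, thick_subcat I -> (forall A, S A -> I A) -> I X.

Definition ideal_closure (S : obj -> Prop) (X : obj) : Prop :=
  forall I, thick_ideal I -> (forall A, S A -> I A) -> I X.

Definition generates (G : obj) : Prop := forall X : obj, thick_closure (fun A => A = G) X.

Definition fg_thick_ideal (I : obj -> Prop) : Prop :=
  exists (n : nat) (a : 'I_n -> obj),
    forall X : obj, I X <-> ideal_closure (fun A => exists i, A = a i) X.

Definition fg_ideals_DCC : Prop :=
  forall I : nat -> obj -> Prop,
    (forall n, fg_thick_ideal (I n)) ->
    (forall n X, I n.+1 X -> I n X) ->
    exists N, forall n, (N <= n)%N -> forall X, I N X -> I n X.

Definition prime_ideal (P : obj -> Prop) : Prop :=
  [/\ thick_ideal P, (exists X, ~ P X)
    & (forall I J, thick_ideal I -> thick_ideal J ->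
         (forall A B, I A -> J B -> P (tens A B)) ->
         (forall X, I X -> P X) \/ (forall X, J X -> P X))].

(* Points of Spc K are the prime ideals; a subset C of Spc K (a predicate on
   ideals, supported on primes) is closed iff it is an intersection
   \bigcap_{A in S} V(A), V(A) = {P | A \notin P}. *)
Definition Spc_closed (C : (obj -> Prop) -> Prop) : Prop :=
  (forall P, C P -> prime_ideal P) /\
  exists S : obj -> Prop,
    forall P, prime_ideal P -> (C P <-> forall A, S A -> ~ P A).

Definition Spc_noetherian : Prop :=
  forall C : nat -> (obj -> Prop) -> Prop,
    (forall n, Spc_closed (C n)) ->
    (forall n P, C n.+1 P -> C n P) ->
    exists N, forall n, (N <= n)%N -> forall P, C N P -> C n P.

End MDCDefs.

(* Main.v *)
Require Import Defs.
From mathcomp Require Import all_boot all_order all_algebra.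
From Stdlib Require Import Classical IndefiniteDescription.
From mathcomp Require classical_sets.
Set Implicit Arguments. Unset Strict Implicit. Unset Printing Implicit Defensive.
Import GRing.Theory.
Local Open Scope ring_scope.

Section Main.
Variable K : MDCData.
Hypothesis HK : is_MDC K.
Local Notation obj := (obj K).

Lemma compA (A B C D : obj) (h : Defs.hom C D) (g : Defs.hom B C) (f : Defs.hom A B) :
  h \oc (g \oc f) = (h \oc g) \oc f.
Proof. by case: HK => [[[H _ _ _ _] _ _ _ _] _ _]; apply: H. Qed.
Lemma comp1l (A B : obj) (f : Defs.hom A B) : idm B \oc f = f.
Proof. by case: HK => [[[_ H _ _ _] _ _ _ _] _ _]; apply: H. Qed.
Lemma comp1r (A B : obj) (f : Defs.hom A B) : f \oc idm A = f.
Proof. by case: HK => [[[_ _ H _ _] _ _ _ _] _ _]; apply: H. Qed.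
Lemma compDl (A B C : obj) (g g' : Defs.hom B C) (f : Defs.hom A B) :
  (g + g') \oc f = g \oc f + g' \oc f.
Proof. by case: HK => [[[_ _ _ H _] _ _ _ _] _ _]; apply: H. Qed.
Lemma compDr (A B C : obj) (g : Defs.hom B C) (f f' : Defs.hom A B) :
  g \oc (f + f') = g \oc f + g \oc f'.
Proof. by case: HK => [[[_ _ _ _ H] _ _ _ _] _ _]; apply: H. Qed.
Lemma comp0l (A B C : obj) (f : Defs.hom A B) : (0 : Defs.hom B C) \oc f = 0.
Proof. have H := compDl (0 : Defs.hom B C) 0 f; rewrite addr0 in H.
by apply: (addrI ((0 : Defs.hom B C) \oc f)); rewrite addr0 -H. Qed.
Lemma comp0r (A B C : obj) (g : Defs.hom B C) : g \oc (0 : Defs.hom A B) = 0.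
Proof. have H := compDr g (0 : Defs.hom A B) 0; rewrite addr0 in H.
by apply: (addrI (g \oc (0 : Defs.hom A B))); rewrite addr0 -H. Qed.
Lemma compNl (A B C : obj) (g : Defs.hom B C) (f : Defs.hom A B) : (- g) \oc f = - (g \oc f).
Proof. apply/eqP; rewrite -subr_eq0 opprK -compDl addNr comp0l //. Qed.
Lemma compNr (A B C : obj) (g : Defs.hom B C) (f : Defs.hom A B) : g \oc (- f) = - (g \oc f).
Proof. apply/eqP; rewrite -subr_eq0 opprK -compDr addNr comp0r //. Qed.
Lemma compBl (A B C : obj) (g g' : Defs.hom B C) (f : Defs.hom A B) :
  (g - g') \oc f = g \oc f - g' \oc f.
Proof. by rewrite compDl compNl. Qed.
Lemma compBr (A B C : obj) (g : Defs.hom B C) (f f' : Defs.hom A B) :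
  g \oc (f - f') = g \oc f - g \oc f'.
Proof. by rewrite compDr compNr. Qed.

Lemma shm1 (A : obj) : shm (idm A) = idm (sh A).
Proof. by case: HK => [[_ _ [H _ _ _ _] _ _] _ _]; apply: H. Qed.
Lemma shmC (A B C : obj) (g : Defs.hom B C) (f : Defs.hom A B) : shm (g \oc f) = shm g \oc shm f.
Proof. by case: HK => [[_ _ [_ H _ _ _] _ _] _ _]; apply: H. Qed.
Lemma shmD (A B : obj) (f f' : Defs.hom A B) : shm (f + f') = shm f + shm f'.
Proof. by case: HK => [[_ _ [_ _ H _ _] _ _] _ _]; apply: H. Qed.
Lemma shm_bij (A B : obj) : bijective (@shm K A B).
Proof. by case: HK => [[_ _ [_ _ _ H _] _ _] _ _]; apply: H. Qed.
Lemma shm0 (A B : obj) : shm (0 : Defs.hom A B) = 0.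
Proof. have H := shmD (0 : Defs.hom A B) 0; rewrite addr0 in H.
by apply: (addrI (shm (0 : Defs.hom A B))); rewrite addr0 -H. Qed.
Lemma shmN (A B : obj) (f : Defs.hom A B) : shm (- f) = - shm f.
Proof. apply/eqP; rewrite -subr_eq0 opprK -shmD addNr shm0 //. Qed.
Lemma shm_inj (A B : obj) : injective (@shm K A B).
Proof. exact: bij_inj (shm_bij A B). Qed.
Lemma shm_surj (A B : obj) (c : Defs.hom (sh A) (sh B)) : exists v, c = shm v.
Proof. case: (shm_bij A B) => g _ H2; exists (g c); by rewrite H2. Qed.

Lemma TR1a (X Z : obj) : is_zero_obj Z -> dist (idm X) (0 : Defs.hom X Z) (0 : Defs.hom Z (sh X)).
Proof. by case: HK => [[_ _ _ [H _ _] _] _ _]; apply: H. Qed.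
Lemma TR1c (X Y : obj) (f : Defs.hom X Y) :
  exists (Z : obj) (g : Defs.hom Y Z) (h : Defs.hom Z (sh X)), dist f g h.
Proof. by case: HK => [[_ _ _ [_ _ H] _] _ _]; apply: H. Qed.
Lemma TR2P (X Y Z : obj) (f : Defs.hom X Y) (g : Defs.hom Y Z) (h : Defs.hom Z (sh X)) :
  dist f g h <-> dist g h (- shm f).
Proof. by case: HK => [[_ _ _ _ [H _ _]] _ _]; apply: H. Qed.
Lemma TR3P : TR3 K.
Proof. by case: HK => [[_ _ _ _ [_ H _]] _ _]. Qed.
Lemma zero_exists : exists Z : obj, is_zero_obj Z.
Proof. by case: HK => [[_ [H _] _ _ _] _ _]. Qed.
Lemma biprod_exists (A B : obj) : exists X, is_biproduct X A B.
Proof. by case: HK => [[_ [_ H] _ _ _] _ _]. Qed.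

Lemma zero_to (A Z : obj) (f : Defs.hom A Z) : is_zero_obj Z -> f = 0.
Proof. by move=> HZ; rewrite -(comp1l f) HZ comp0l. Qed.
Lemma zero_from (A Z : obj) (f : Defs.hom Z A) : is_zero_obj Z -> f = 0.
Proof. by move=> HZ; rewrite -(comp1r f) HZ comp0r. Qed.

Lemma dist_comp0 (X Y Z : obj) (f : Defs.hom X Y) (g : Defs.hom Y Z) (h : Defs.hom Z (sh X)) :
  dist f g h -> g \oc f = 0.
Proof.
move=> Hd; case: zero_exists => Z0 HZ0.
have H0 := TR1a X HZ0.
have [c [Hc _]] := TR3P H0 Hd (erefl (f \oc idm X)).
by rewrite -Hc comp0r.
Qed.

Lemma dist_comp0b (X Y Z : obj) (f : Defs.hom X Y) (g : Defs.hom Y Z) (h : Defs.hom Z (sh X)) :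
  dist f g h -> h \oc g = 0.
Proof. by move/TR2P/dist_comp0. Qed.

Lemma dist_comp0c (X Y Z : obj) (f : Defs.hom X Y) (g : Defs.hom Y Z) (h : Defs.hom Z (sh X)) :
  dist f g h -> shm f \oc h = 0.
Proof. move/TR2P/TR2P/dist_comp0; rewrite compNl => /eqP; rewrite oppr_eq0 => /eqP //. Qed.

Lemma dist_exact (X Y Z : obj) (f : Defs.hom X Y) (g : Defs.hom Y Z) (h : Defs.hom Z (sh X))
  (W : obj) (u : Defs.hom W Y) : dist f g h -> g \oc u = 0 -> exists v, u = f \oc v.
Proof.
move=> Hd Hu; case: zero_exists => Z0 HZ0.
have H0 := TR1a W HZ0; move/TR2P: H0 => H0.
move/TR2P: Hd => Hd.
have Hc : (0 : Defs.hom Z0 Z) \oc (0 : Defs.hom W Z0) = g \oc u by rewrite comp0l Hu.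
have [c [_ Hc2]] := TR3P H0 Hd Hc.
case: (shm_surj c) => v Hv; exists v.
apply: shm_inj; move: Hc2; rewrite shm1 compNr comp1r compNl Hv -shmC => /eqP.
by rewrite eqr_opp => /eqP.
Qed.


Lemma retract_split (R Y : obj) (s : Defs.hom R Y) (r : Defs.hom Y R) : r \oc s = idm R ->
  exists (C : obj) (g : Defs.hom Y C) (h : Defs.hom C (sh R)) (t : Defs.hom C Y),
   [/\ dist s g h, g \oc s = 0, g \oc t = idm C, r \oc t = 0 & s \oc r + t \oc g = idm Y].
Proof.
move=> Hrs; case: (TR1c s) => C [g [h Hd]].
have gs := dist_comp0 Hd.
have h0 : h = 0.
  have := dist_comp0c Hd => H.
  by rewrite -(comp1l h) -shm1 -Hrs shmC -compA H comp0r.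
have [t0 Ht0] : exists t0, idm C = g \oc t0.
  have Hd2 := proj1 (TR2P s g h) Hd.
  apply: (dist_exact Hd2); by rewrite h0 comp0l.
pose t := t0 - s \oc (r \oc t0).
have gt : g \oc t = idm C by rewrite compBr compA gs comp0l subr0 Ht0.
have rt : r \oc t = 0 by rewrite compBr compA Hrs comp1l subrr.
pose u := idm Y - s \oc r - t \oc g.
have gu : g \oc u = 0.
  by rewrite /u !compBr comp1r compA gs comp0l compA gt comp1l subr0 subrr.
have [v Hv] := dist_exact Hd gu.
have ru : r \oc u = 0.
  by rewrite /u !compBr comp1r compA Hrs comp1l compA rt comp0l subrr subr0.
have v0 : v = 0 by rewrite -(comp1l v) -Hrs -compA -Hv ru.
exists C, g, h, t; split => //.
have u0 : u = 0 by rewrite Hv v0 comp0r.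
move/eqP: u0; rewrite /u subr_eq add0r subr_eq => /eqP ->.
by rewrite addrC.
Qed.


Lemma iso_comp (A B C : obj) (g : Defs.hom B C) (f : Defs.hom A B) :
  is_iso f -> is_iso g -> is_iso (g \oc f).
Proof.
move=> [f' [f1 f2]] [g' [g1 g2]]; exists (f' \oc g'); split.
  by rewrite compA -(compA f' g') g1 comp1r f1.
by rewrite compA -(compA g f) f2 comp1r g2.
Qed.
Lemma iso_sym (A B : obj) (f : Defs.hom A B) :
  is_iso f -> exists g : Defs.hom B A, is_iso g.
Proof. by move=> [g [g1 g2]]; exists g; exists f. Qed.

Lemma thick_zero (I : obj -> Prop) : thick_subcat I -> forall Z, is_zero_obj Z -> I Z.
Proof. by case. Qed.
Lemma thick_iso (I : obj -> Prop) (X Y : obj) (f : Defs.hom X Y) :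
  thick_subcat I -> is_iso f -> I X -> I Y.
Proof. by case=> _ H _ _ _; apply: H. Qed.
Lemma thick_isoV (I : obj -> Prop) (X Y : obj) (f : Defs.hom X Y) :
  thick_subcat I -> is_iso f -> I Y -> I X.
Proof. move=> HI /iso_sym [g Hg]; exact: thick_iso HI Hg. Qed.
Lemma thick_sh (I : obj -> Prop) : thick_subcat I -> forall X, I X <-> I (sh X).
Proof. by case. Qed.
Lemma thick_tri (I : obj -> Prop) : thick_subcat I ->
  forall (X Y Z : obj) (f : Defs.hom X Y) (g : Defs.hom Y Z) (h : Defs.hom Z (sh X)),
         dist f g h -> [/\ (I X -> I Y -> I Z), (I X -> I Z -> I Y) & (I Y -> I Z -> I X)].
Proof. by case. Qed.
Lemma thick_sum (I : obj -> Prop) : thick_subcat I ->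
  forall X A B : obj, is_biproduct X A B -> I X -> I A.
Proof. by case. Qed.

Lemma biproduct_sym (X A B : obj) : is_biproduct X A B -> is_biproduct X B A.
Proof.
move=> [i1 [p1 [i2 [p2 [H1 H2 H3 H4 H5]]]]].
by exists i2, p2, i1, p1; split => //; rewrite addrC.
Qed.

Lemma thick_retract (I : obj -> Prop) (R Y : obj) (s : Defs.hom R Y) (r : Defs.hom Y R) :
  thick_subcat I -> r \oc s = idm R -> I Y -> I R.
Proof.
move=> HI Hrs HY; have [C [g [h [t [Hd gs gt rt Hs]]]]] := retract_split Hrs.
apply: (thick_sum HI _ HY); exists s, r, t, g; split => //.
Qed.

Lemma thick_biprod (I : obj -> Prop) (X A B : obj) :
  thick_subcat I -> is_biproduct X A B -> I A -> I B -> I X.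
Proof.
move=> HI [i1 [p1 [i2 [p2 [H1 H2 H3 H4 H5]]]]] IA IB.
have [C [g [h [t [Hd gs gt rt Hs]]]]] := retract_split H1.
have tg : t \oc g = idm X - i1 \oc p1 by rewrite -Hs [i1 \oc p1 + _]addrC addrK.
have ip : i2 \oc p2 = idm X - i1 \oc p1 by rewrite -H5 [i1 \oc p1 + _]addrC addrK.
have iso1 : is_iso (g \oc i2).
  exists (p2 \oc t); split.
    rewrite compA -(compA p2 t g) tg compBr comp1r compBl H2 compA H4 comp0l comp0l subr0 //.
  rewrite compA -(compA g i2 p2) ip compBr comp1r compBl gt compA gs comp0l comp0l subr0 //.
have IC : I C := thick_iso HI iso1 IB.
by case: (thick_tri HI Hd) => _ H _; apply: H.
Qed.


Lemma tensm11 (A B : obj) : tensm (idm A) (idm B) = idm (tens A B).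
Proof. by case: HK => [_ [H _ _ _] _]; apply: H. Qed.
Lemma tensmC (A A' A'' B B' B'' : obj) (f : Defs.hom A A') (f' : Defs.hom A' A'')
  (g : Defs.hom B B') (g' : Defs.hom B' B'') :
  tensm (f' \oc f) (g' \oc g) = tensm f' g' \oc tensm f g.
Proof. by case: HK => [_ [_ H _ _] _]; apply: H. Qed.
Lemma assoc_iso (A B C : obj) : is_iso (assoc A B C).
Proof. case: HK => [_ [_ _ _ [_ _ [H _ _] _ _]] _]; exists (associ A B C); exact: H. Qed.
Lemma associ_iso (A B C : obj) : is_iso (associ A B C).
Proof. case: HK => [_ [_ _ _ [_ _ [H _ _] _ _]] _]; exists (assoc A B C).
by case: (H A B C) => ? ?; split. Qed.
Lemma lunit_iso (A : obj) : is_iso (lunit A).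
Proof. case: HK => [_ [_ _ _ [_ _ [_ H _] _ _]] _]; exists (luniti A); exact: H. Qed.
Lemma runit_iso (A : obj) : is_iso (runit A).
Proof. case: HK => [_ [_ _ _ [_ _ [_ _ H] _ _]] _]; exists (runiti A); exact: H. Qed.
Lemma runiti_iso (A : obj) : is_iso (runiti A).
Proof. case: HK => [_ [_ _ _ [_ _ [_ _ H] _ _]] _]; exists (runit A).
by case: (H A) => ? ?; split. Qed.
Lemma tensm_iso (A A' B B' : obj) (f : Defs.hom A A') (g : Defs.hom B B') :
  is_iso f -> is_iso g -> is_iso (tensm f g).
Proof.
move=> [f' [f1 f2]] [g' [g1 g2]]; exists (tensm f' g'); split.
  by rewrite -tensmC f1 g1 tensm11.
by rewrite -tensmC f2 g2 tensm11.
Qed.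
Lemma iso_id (A : obj) : is_iso (idm A).
Proof. by exists (idm A); rewrite comp1l. Qed.

Lemma tensmDl (A A' B B' : obj) (f f' : Defs.hom A A') (g : Defs.hom B B') :
  tensm (f + f') g = tensm f g + tensm f' g.
Proof. by case: HK => [_ _ [H _ _ _]]; apply: H. Qed.
Lemma tensmDr (A A' B B' : obj) (f : Defs.hom A A') (g g' : Defs.hom B B') :
  tensm f (g + g') = tensm f g + tensm f g'.
Proof. by case: HK => [_ _ [_ H _ _]]; apply: H. Qed.

Definition exactF (F : obj -> obj) (Fm : forall A B, Defs.hom A B -> Defs.hom (F A) (F B)) :=
  [/\ (forall A, Fm _ _ (idm A) = idm (F A)),
      (forall (A B C : obj) (g : Defs.hom B C) (f : Defs.hom A B),
          Fm _ _ (g \oc f) = Fm _ _ g \oc Fm _ _ f),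
      (forall (A B : obj) (f f' : Defs.hom A B), Fm _ _ (f + f') = Fm _ _ f + Fm _ _ f')
    & exists theta : forall B, Defs.hom (F (sh B)) (sh (F B)),
        (forall B, is_iso (theta B)) /\
        (forall (X Y Z : obj) (f : Defs.hom X Y) (g : Defs.hom Y Z) (h : Defs.hom Z (sh X)),
           dist f g h -> dist (Fm _ _ f) (Fm _ _ g) (theta X \oc Fm _ _ h))].
Arguments exactF : clear implicits.

Lemma exactF_comp F Fm F' Fm' : exactF F Fm -> exactF F' Fm' ->
  exactF (fun X => F' (F X)) (fun A B f => Fm' _ _ (Fm A B f)).
Proof.
move=> [H1 H2 H3 [th [Hth Hd]]] [H1' H2' H3' [th' [Hth' Hd']]]; split.
- by move=> A; rewrite H1 H1'.
- by move=> A B C g f; rewrite H2 H2'.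
- by move=> A B f f'; rewrite H3 H3'.
exists (fun B => th' (F B) \oc Fm' _ _ (th B)); split.
  move=> B; apply: iso_comp (Hth' _); case: (Hth B) => g [g1 g2].
  by exists (Fm' _ _ g); rewrite -!H2' g1 g2 !H1'.
move=> X Y Z f g h Hfgh; have := Hd' _ _ _ _ _ _ (Hd _ _ _ _ _ _ Hfgh).
by rewrite H2' compA.
Qed.

Lemma exactF_left (A : obj) : exactF (fun X => tens A X) (fun X Y f => tensm (idm A) f).
Proof.
split.
- by move=> B; rewrite tensm11.
- by move=> B C D g f; rewrite -tensmC comp1l.
- by move=> B C f f'; rewrite tensmDr.
case: HK => [_ _ [_ _ H _]]; case: (H A) => th [Hth _ Hd]; exists th; split => //.
Qed.

Lemma exactF_right (A : obj) : exactF (fun X => tens X A) (fun X Y f => tensm f (idm A)).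
Proof.
split.
- by move=> B; rewrite tensm11.
- by move=> B C D g f; rewrite -tensmC comp1l.
- by move=> B C f f'; rewrite tensmDl.
case: HK => [_ _ [_ _ _ H]]; case: (H A) => th [Hth _ Hd]; exists th; split => //.
Qed.

Lemma thick_preimage (I : obj -> Prop) F Fm :
  thick_subcat I -> exactF F Fm -> thick_subcat (fun X => I (F X)).
Proof.
move=> HI [H1 H2 H3 [th [Hth Hd]]].
have F0 : forall A B, Fm A B 0 = 0.
  move=> A B; have H := H3 A B 0 0; rewrite addr0 in H.
  by apply: (addrI (Fm A B 0)); rewrite addr0 -H.
have Fiso : forall A B (f : Defs.hom A B), is_iso f -> is_iso (Fm _ _ f).
  move=> A B f [g [g1 g2]]; exists (Fm _ _ g); by rewrite -!H2 g1 g2 !H1.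
split.
- move=> Z HZ; apply: (thick_zero HI); by rewrite /is_zero_obj -H1 HZ F0.
- move=> X Y f Hf; exact: thick_iso HI (Fiso _ _ _ Hf).
- move=> X; split => H.
    exact: thick_isoV HI (Hth X) (proj1 (thick_sh HI _) H).
  exact: proj2 (thick_sh HI _) (thick_iso HI (Hth X) H).
- move=> X Y Z f g h Hfgh; have := thick_tri HI (Hd _ _ _ _ _ _ Hfgh); exact.
- move=> X A B [i1 [p1 [i2 [p2 [E1 E2 E3 E4 E5]]]]] HX.
  apply: (thick_sum HI _ HX); exists (Fm _ _ i1), (Fm _ _ p1), (Fm _ _ i2), (Fm _ _ p2).
  by split; rewrite -?H2 -?H3 ?E1 ?E2 ?E3 ?E4 ?E5 ?H1 ?F0.
Qed.


Lemma thick_ext (Q Q' : obj -> Prop) : (forall X, Q X <-> Q' X) -> thick_subcat Q -> thick_subcat Q'.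
Proof.
move=> E [H1 H2 H3 H4 H5]; split.
- by move=> Z HZ; apply/E; apply: H1.
- by move=> X Y f Hf /E HX; apply/E; apply: H2 Hf HX.
- by move=> X; rewrite -!E.
- move=> X Y Z f g h Hd; case: (H4 _ _ _ _ _ _ Hd) => a b c; split.
  + by move=> /E ? /E ?; apply/E; apply: a.
  + by move=> /E ? /E ?; apply/E; apply: b.
  + by move=> /E ? /E ?; apply/E; apply: c.
- by move=> X A B Hb /E HX; apply/E; apply: H5 Hb HX.
Qed.

Lemma thick_impl (c : Prop) (Q : obj -> Prop) :
  (c -> thick_subcat Q) -> thick_subcat (fun X => c -> Q X).
Proof.
move=> HQ; split.
- by move=> Z HZ Hc; apply: (thick_zero (HQ Hc)).
- by move=> X Y f Hf HX Hc; apply: (thick_iso (HQ Hc) Hf (HX Hc)).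
- move=> X; split => H Hc; have [a b] := thick_sh (HQ Hc) X; [apply: a | apply: b]; exact: H Hc.
- move=> X Y Z f g h Hd; split => Ha Hb Hc; case: (thick_tri (HQ Hc) Hd) => a b c';
    [apply: a | apply: b | apply: c']; by [apply: Ha | apply: Hb].
- by move=> X A B Hb HX Hc; apply: (thick_sum (HQ Hc) Hb (HX Hc)).
Qed.

Lemma thick_inter (T : Type) (J : T -> obj -> Prop) :
  (forall i, thick_subcat (J i)) -> thick_subcat (fun X => forall i, J i X).
Proof.
move=> HJ; split.
- by move=> Z HZ i; apply: (thick_zero (HJ i)).
- by move=> X Y f Hf HX i; apply: (thick_iso (HJ i) Hf (HX i)).
- move=> X; split => H i; have [a b] := thick_sh (HJ i) X; [apply: a | apply: b]; exact: H i.
- move=> X Y Z f g h Hd; split => Ha Hb i; case: (thick_tri (HJ i) Hd) => a b c';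
    [apply: a | apply: b | apply: c']; by [apply: Ha | apply: Hb].
- by move=> X A B Hb HX i; apply: (thick_sum (HJ i) Hb (HX i)).
Qed.

Lemma ideal_thick (I : obj -> Prop) : thick_ideal I -> thick_subcat I.
Proof. by case. Qed.
Lemma ideal_l (I : obj -> Prop) (A X : obj) : thick_ideal I -> I X -> I (tens A X).
Proof. by case=> _ H HX; case: (H A X HX). Qed.
Lemma ideal_r (I : obj -> Prop) (A X : obj) : thick_ideal I -> I X -> I (tens X A).
Proof. by case=> _ H HX; case: (H A X HX). Qed.
Arguments ideal_l [I A X].
Arguments ideal_r [I A X].

Lemma ideal_ext (Q Q' : obj -> Prop) : (forall X, Q X <-> Q' X) -> thick_ideal Q -> thick_ideal Q'.
Proof.
move=> E [HQ Ht]; split; first exact: thick_ext E HQ.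
by move=> A X /E HX; case: (Ht A X HX); rewrite !E.
Qed.

Lemma closure_ideal (S : obj -> Prop) : thick_ideal (ideal_closure S).
Proof.
split.
  apply: (thick_inter (J := fun I X => thick_ideal I -> (forall A, S A -> I A) -> I X)) => I.
  apply: thick_impl => HI; apply: thick_impl => _; exact: ideal_thick.
move=> A X HX; split => I HI HS.
  exact: ideal_l HI (HX I HI HS).
exact: ideal_r HI (HX I HI HS).
Qed.
Lemma closure_in (S : obj -> Prop) (A : obj) : S A -> ideal_closure S A.
Proof. by move=> HA I _ HS; apply: HS. Qed.
Lemma closure_min (S I : obj -> Prop) (X : obj) :
  thick_ideal I -> (forall A, S A -> I A) -> ideal_closure S X -> I X.
Proof. by move=> HI HS HX; apply: HX. Qed.

Lemma ideal_iso (I : obj -> Prop) (X Y : obj) (f : Defs.hom X Y) :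
  thick_ideal I -> is_iso f -> I X -> I Y.
Proof. by move=> /ideal_thick HI; apply: thick_iso. Qed.
Lemma ideal_isoV (I : obj -> Prop) (X Y : obj) (f : Defs.hom X Y) :
  thick_ideal I -> is_iso f -> I Y -> I X.
Proof. by move=> /ideal_thick HI; apply: thick_isoV. Qed.

Lemma closure_prod (P S1 S2 : obj -> Prop) : thick_ideal P ->
  (forall a b W, S1 a -> S2 b -> P (tens (tens a W) b)) ->
  forall x y W, ideal_closure S1 x -> ideal_closure S2 y -> P (tens (tens x W) y).
Proof.
move=> HP Hab.
pose T2 := fun x => forall W b, S2 b -> P (tens (tens x W) b).
have T2i : thick_ideal T2.
  split.
    apply: (thick_inter (J := fun W x => forall b, S2 b -> P (tens (tens x W) b))) => W.
    apply: (thick_inter (J := fun b x => S2 b -> P (tens (tens x W) b))) => b.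
    apply: thick_impl => _.
    exact: thick_preimage (ideal_thick HP) (exactF_comp (exactF_right W) (exactF_right b)).
  move=> V x Hx; split => W b Sb.
    apply: (ideal_isoV HP (tensm_iso (assoc_iso V x W) (iso_id b))).
    apply: (ideal_isoV HP (assoc_iso _ _ _)).
    exact: ideal_l HP (Hx W b Sb).
  apply: (ideal_isoV HP (tensm_iso (assoc_iso x V W) (iso_id b))).
  exact: Hx.
move=> x y W Hx; have T2x : T2 x by apply: (closure_min T2i) Hx => a Sa W' b Sb; apply: Hab.
pose T3 := fun y => forall W, P (tens (tens x W) y).
have T3i : thick_ideal T3.
  split.
    apply: (thick_inter (J := fun W y => P (tens (tens x W) y))) => W'.
    exact: thick_preimage (ideal_thick HP) (exactF_left _).
  move=> V y' Hy; split => W'.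
    apply: (ideal_iso HP (assoc_iso (tens x W') V y')).
    apply: (ideal_iso HP (tensm_iso (associ_iso x W' V) (iso_id y'))).
    exact: Hy.
  apply: (ideal_iso HP (assoc_iso _ _ _)).
  exact: ideal_r HP (Hy W').
move=> Hy; apply: (closure_min T3i) Hy W => b Sb W'; exact: T2x.
Qed.

Lemma unit_tens (P : obj -> Prop) (x y : obj) : thick_ideal P ->
  P (tens (tens x unit) y) -> P (tens x y).
Proof. move=> HP; apply: (ideal_isoV HP (tensm_iso (runiti_iso x) (iso_id y))). Qed.


Lemma prime_ideal_i (P : obj -> Prop) : prime_ideal P -> thick_ideal P.
Proof. by case. Qed.

Lemma ideal_unit_all (P : obj -> Prop) : thick_ideal P -> P unit -> forall X, P X.
Proof. move=> HP Hu X; apply: (ideal_iso HP (lunit_iso X)); exact: ideal_r HP Hu. Qed.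

Lemma prime_unit (P : obj -> Prop) : prime_ideal P -> ~ P unit.
Proof. move=> [HP [X HX] _] Hu; apply: HX; exact: ideal_unit_all HP Hu X. Qed.

Lemma prime_tens (G : obj) (P : obj -> Prop) (A B : obj) : generates G -> prime_ideal P ->
  ~ P A -> ~ P B -> ~ P (tens (tens A G) B).
Proof.
move=> HG [HP _ Hpr] HA HB HAB.
have T1 : forall Z, P (tens (tens A Z) B).
  move=> Z; apply: (HG Z (fun Z => P (tens (tens A Z) B))); last by move=> ? ->.
  exact: thick_preimage (ideal_thick HP) (exactF_comp (exactF_left A) (exactF_right B)).
have Hall := closure_prod (S1 := fun a => a = A) (S2 := fun b => b = B) HP.
have : forall x y, ideal_closure (fun a => a = A) x -> ideal_closure (fun b => b = B) y ->
    P (tens x y).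
  move=> x y Hx Hy; apply: unit_tens HP _; apply: Hall Hx Hy.
  by move=> a b W -> ->.
move/(Hpr _ _ (closure_ideal _) (closure_ideal _)) => [H|H].
  by apply: HA; apply: H; apply: closure_in.
by apply: HB; apply: H; apply: closure_in.
Qed.

Lemma semiprime (A : obj) (I : obj -> Prop) :
  ((forall X : obj, left_dualizable X) \/ (forall X : obj, right_dualizable X)) ->
  thick_ideal I -> (forall X, I (tens (tens A X) A)) -> I A.
Proof.
move=> [Hl|Hr] HI HX.
  case: (Hl A) => L [ev [coev [Z1 _]]].
  apply: (thick_retract (s := tensm coev (idm A) \oc luniti A)
     (r := runit A \oc tensm (idm A) ev \oc assoc A L A) (ideal_thick HI)).
    by rewrite compA.
  exact: HX.
case: (Hr A) => R [ev [coev [_ Z2]]].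
apply: (thick_retract (s := associ A R A \oc tensm (idm A) coev \oc runiti A)
   (r := lunit A \oc tensm ev (idm A)) (ideal_thick HI)).
  by rewrite !compA.
exact: HX.
Qed.


Lemma prime_exists (I : obj -> Prop) (A : obj) :
  (forall (I : obj -> Prop) (B : obj), thick_ideal I -> (forall X, I (tens (tens B X) B)) -> I B) ->
  thick_ideal I -> ~ I A ->
  exists P, [/\ prime_ideal P, (forall X, I X -> P X) & ~ P A].
Proof.
move=> semi HI HA.
have step : forall B, exists X, ~ I B -> ~ I (tens (tens B X) B).
  move=> B; case: (classic (I B)) => IB; first by exists B.
  apply: NNPP => Hn; apply: IB; apply: semi HI _ => X.
  apply: NNPP => HX; apply: Hn; by exists X.
pose f B := proj1_sig (constructive_indefinite_description _ (step B)).
have Hf : forall B, ~ I B -> ~ I (tens (tens B (f B)) B).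
  by move=> B; rewrite /f; case: constructive_indefinite_description.
pose a := fix a (n : nat) : obj :=
  match n with 0 => A | k.+1 => tens (tens (a k) (f (a k))) (a k) end.
have aS : forall n, a n.+1 = tens (tens (a n) (f (a n))) (a n) by [].
have aI : forall k, ~ I (a k) by elim=> [|k IH] //=; apply: Hf.
pose Fam := fun J : obj -> Prop =>
  thick_ideal (fun X => I X \/ J X) /\ (forall k, ~ J (a k)).
have Zh : forall F : classical_sets.set (classical_sets.set obj),
    classical_sets.subset F Fam -> classical_sets.total_on F classical_sets.subset ->
    Fam (classical_sets.bigcup F id).
  move=> F FF Ftot.
  pose U := classical_sets.bigcup F id.
  have UE : forall x, U x <-> exists2 J, F J & J x by [].
  have Good0 : Fam (fun _ => False).
    split; last by move=> k [].
    by apply: ideal_ext HI => X; split; [left | case].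
  have inU : forall J, F J -> forall z, J z -> U z.
    by move=> J FJ z Jz; apply/UE; exists J.
  have one : forall x, I x \/ U x -> exists J, [/\ Fam J, (forall z, J z -> U z) & I x \/ J x].
    move=> x [Ix|/UE [J FJ Jx]].
      by exists (fun _ => False); split => //; left.
    by exists J; split; [exact: FF | exact: inU | right].
  have two : forall x y, I x \/ U x -> I y \/ U y ->
      exists J, [/\ Fam J, (forall z, J z -> U z), I x \/ J x & I y \/ J y].
    move=> x y Hx Hy.
    case: Hx => [Ix|/UE [J FJ Jx]].
      by case: (one y Hy) => J [FJ JU Jy]; exists J; split => //; left.
    case: Hy => [Iy|/UE [J' FJ' Jy]].
      by exists J; split; [exact: FF | exact: inU | right | left].
    case: (Ftot _ _ FJ FJ') => sub.
      by exists J'; split; [exact: FF | exact: inU | right; apply: sub | right].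
    by exists J; split; [exact: FF | exact: inU | right | right; apply: sub].
  have lift : forall J, (forall z, J z -> U z) -> forall z, I z \/ J z -> I z \/ U z.
    by move=> J JU z [?|?]; [left | right; apply: JU].
  split; last first.
    by move=> k /UE [J FJ Jk]; case: (FF _ FJ) => _ H; apply: (H k).
  split; first split.
  - by move=> Z HZ; left; apply: (thick_zero (ideal_thick HI)).
  - move=> X Y g Hg /one [J [[FJ _] JU HX]]; apply: (lift _ JU).
    exact: thick_iso (ideal_thick FJ) Hg HX.
  - move=> X; split=> /one [J [[FJ _] JU HX]]; apply: (lift _ JU);
      have [c1 c2] := thick_sh (ideal_thick FJ) X; [exact: c1 HX | exact: c2 HX].
  - move=> X Y Z g1 g2 g3 Hd; split=> H1 H2; case: (two _ _ H1 H2) => J [[FJ _] JU J1 J2];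
      apply: (lift _ JU); case: (thick_tri (ideal_thick FJ) Hd) => c1 c2 c3;
      [apply: c1 | apply: c2 | apply: c3] => //.
  - move=> X A1 B1 Hb /one [J [[FJ _] JU HX]]; apply: (lift _ JU).
    exact: (@thick_sum (fun X => I X \/ J X) (ideal_thick FJ) _ _ _ Hb HX).
  - move=> V X /one [J [[FJ _] JU HX]]; split; apply: (lift _ JU);
      [exact: ideal_l FJ HX | exact: ideal_r FJ HX].
have [M [[FM Ma] Mmax]] := classical_sets.Zorn_bigcup Zh.
pose P := fun X => I X \/ M X.
have aP : forall k, ~ P (a k) by move=> k [|]; [apply: aI | apply: Ma].
have maxP : forall Q, thick_ideal Q -> (forall X, P X -> Q X) -> (forall k, ~ Q (a k)) ->
    forall X, Q X -> P X.
  move=> Q HQ PQ Qa.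
  have FQ : Fam Q.
    split => //; apply: ideal_ext HQ => X; split; first by right.
    by case=> // IX; apply: PQ; left.
  have QM : forall X, Q X -> M X.
    apply: NNPP => Hn; apply: (Mmax Q) FQ; split.
      by move=> X MX; apply: PQ; right.
    exact: Hn.
  by move=> X /QM; right.
have mono : forall Q k, thick_ideal Q -> Q (a k) -> forall d, Q (a (k + d)%N).
  move=> Q k HQ Hk; elim=> [|d IH]; first by rewrite addn0.
  rewrite addnS aS.
  exact: (ideal_r HQ (ideal_r HQ IH)).
exists P; split; [| by move=> X IX; left | exact: (aP 0)].
split => //; first by exists (a 0); apply: aP.
move=> I' J' HI' HJ' Hprod.
case: (classic (forall X, I' X -> P X)) => HI'P; first by left.
right => Y J'Y; apply: NNPP => PY.
case: (not_all_ex_not _ _ HI'P) => X HX.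
have [I'X PX] : I' X /\ ~ P X.
  by split; [apply: NNPP => H; apply: HX => ? | move=> H; apply: HX].
have near : forall W, ~ P W -> exists k,
    ideal_closure (fun Z => P Z \/ Z = W) (a k).
  move=> W PW; apply: NNPP => Hn; apply: PW.
  apply: (maxP _ (closure_ideal (fun Z => P Z \/ Z = W))).
  - by move=> Z PZ; apply: closure_in => /=; left.
  - by move=> k Hk; apply: Hn; exists k.
  - by apply: closure_in => /=; right.
case: (near X PX) => k Hk; case: (near Y PY) => l Hl.
have Hk' := mono _ _ (closure_ideal _) Hk l.
have Hl' := mono _ _ (closure_ideal _) Hl k; rewrite addnC in Hl'.
apply: (aP (k + l)%N.+1); rewrite aS.
apply: (closure_prod (S1 := fun Z => P Z \/ Z = X) (S2 := fun Z => P Z \/ Z = Y) FM) Hk' Hl'.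
move=> a1 b1 W [Pa|->] [Pb|->].
- exact: (ideal_r FM (ideal_r FM Pa)).
- exact: (ideal_r FM (ideal_r FM Pa)).
- exact: (ideal_l FM Pb).
- apply: Hprod => //; exact: ideal_r HI' I'X.
Qed.


Lemma fin_gen (m : nat) (a : 'I_m -> obj) :
  exists b, forall Q, thick_subcat Q -> (Q b <-> forall i, Q (a i)).
Proof.
elim: m a => [|m IH] a.
  case: zero_exists => Z HZ; exists Z => Q HQ; split => _; last exact: thick_zero HQ Z HZ.
  by case.
case: (IH (fun i => a (lift ord0 i))) => b' Hb'.
case: (biprod_exists (a ord0) b') => X HX; exists X => Q HQ; split.
  move=> QX i; case: (unliftP ord0 i) => [j ->|->].
    exact: (proj1 (Hb' Q HQ) (@thick_sum Q HQ _ _ _ (biproduct_sym HX) QX) j).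
  exact: (@thick_sum Q HQ _ _ _ HX QX).
move=> Hall; apply: (thick_biprod HQ HX (Hall ord0)).
by apply: (proj2 (Hb' Q HQ)) => j; apply: Hall.
Qed.

Lemma fg_gen (I : obj -> Prop) : fg_thick_ideal I ->
  exists b, [/\ thick_ideal I, I b & forall Q, thick_ideal Q -> Q b -> forall X, I X -> Q X].
Proof.
move=> [m [a HI]].
have TI : thick_ideal I.
  by apply: ideal_ext (closure_ideal (fun A => exists i, A = a i)) => X; rewrite HI.
case: (fin_gen a) => b Hb; exists b; split => //.
  apply/(Hb _ (ideal_thick TI)) => i; apply/HI; apply: closure_in; by exists i.
move=> Q HQ Qb X /HI; apply: (closure_min HQ) => A [i ->].
by move/(Hb _ (ideal_thick HQ)): Qb; apply.
Qed.

Lemma dcc_supports (G : obj) : generates G -> fg_ideals_DCC K ->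
  forall B : nat -> obj,
  (forall n P, prime_ideal P -> ~ P (B n.+1) -> ~ P (B n)) ->
  exists N, forall n, (N <= n)%N -> forall P, prime_ideal P -> ~ P (B N) -> ~ P (B n).
Proof.
move=> HG Hdcc B HB.
pose D := fix D (n : nat) : obj :=
  match n with 0 => B 0 | k.+1 => tens (tens (D k) G) (B k.+1) end.
have DS : forall n, D n.+1 = tens (tens (D n) G) (B n.+1) by [].
have suppD : forall n P, prime_ideal P -> (~ P (D n) <-> ~ P (B n)).
  elim=> [|n IH] P HP; first by [].
  rewrite DS; split.
    by move=> H1 H2; apply: H1; apply: (ideal_l (prime_ideal_i HP) H2).
  move=> H1; apply: (prime_tens HG HP) => //; apply/(IH P HP); exact: HB H1.
pose J n := ideal_closure (fun A => exists i : 'I_1, A = D n).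
have Jfg : forall n, fg_thick_ideal (J n) by move=> n; exists 1%N, (fun _ => D n).
have Jdesc : forall n X, J n.+1 X -> J n X.
  move=> n X; rewrite /J; apply: (closure_min (closure_ideal _)) => A [_ ->].
  rewrite DS; apply: (ideal_r (closure_ideal _)); apply: (ideal_r (closure_ideal _)).
  by apply: closure_in; exists ord0.
case: (Hdcc J Jfg Jdesc) => N HN; exists N => n Hnn P HP HBN.
apply/(suppD n P HP) => PDn.
have JP : forall X, J n X -> P X.
  move=> X; apply: (closure_min (prime_ideal_i HP)) => A [_ ->]; exact: PDn.
apply: (proj2 (suppD N P HP) HBN); apply: JP; apply: (HN n Hnn).
by apply: closure_in; exists ord0.
Qed.


Lemma closed_support (G : obj) : generates G -> fg_ideals_DCC K ->
  forall C : (obj -> Prop) -> Prop, Spc_closed C -> exists B, forall P, prime_ideal P -> (C P <-> ~ P B).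
Proof.
move=> HG Hdcc C [Cpr [S HS]].
pose Phi (B : obj) := forall P : obj -> Prop, prime_ideal P -> C P -> ~ P B.
pose le (B B' : obj) := forall P : obj -> Prop, prime_ideal P -> ~ P B -> ~ P B'.
have [M [PhiM Mmin]] : exists M, Phi M /\ forall B', Phi B' -> le B' M -> le M B'.
  apply: NNPP => Hno.
  have step : forall B, exists B', Phi B -> [/\ Phi B', le B' B & ~ le B B'].
    move=> B; case: (classic (Phi B)) => PB; last by exists B.
    have : ~ (forall B', Phi B' -> le B' B -> le B B').
      by move=> H; apply: Hno; exists B.
    move/not_all_ex_not => [B' HB']; exists B' => _.
    case: (classic (Phi B')) => PB'; last by exfalso; apply: HB' => H.
    case: (classic (le B' B)) => LB; last by exfalso; apply: HB' => _ H.
    by split => // H; apply: HB' => _ _.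
  pose g B := proj1_sig (constructive_indefinite_description _ (step B)).
  have Hg : forall B, Phi B -> [/\ Phi (g B), le (g B) B & ~ le B (g B)].
    by move=> B; rewrite /g; case: constructive_indefinite_description.
  pose c n := iter n g unit.
  have Phic : forall n, Phi (c n).
    elim=> [|n IH]; first by move=> P HP _; apply: prime_unit.
    by rewrite /c iterS; case: (Hg _ IH).
  have Hdesc : forall n P, prime_ideal P -> ~ P (c n.+1) -> ~ P (c n).
    move=> n P HP; rewrite /c iterS; case: (Hg _ (Phic n)) => _ H _; exact: H.
  have [N HN] := dcc_supports HG Hdcc Hdesc.
  case: (Hg _ (Phic N)) => _ _; apply => P HP.
  exact: (HN N.+1 (leqnSn N) P HP).
exists M => P HP; split; first exact: PhiM.
move=> nPM; apply/(HS P HP) => A SA PA.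
pose M' := tens (tens M G) A.
have PhiM' : Phi M'.
  move=> P' HP' CP'; apply: (prime_tens HG HP'); first exact: PhiM.
  exact: (proj1 (HS P' HP') CP' A SA).
have LM : le M' M.
  move=> P' HP' nM' PM; apply: nM'.
  exact: (ideal_r (prime_ideal_i HP') (ideal_r (prime_ideal_i HP') PM)).
apply: (Mmin M' PhiM' LM P HP nPM).
exact: (ideal_l (prime_ideal_i HP) PA).
Qed.

End Main.

Theorem mainTheorem16 (K : MDCData) (HK : is_MDC K) (G : obj K) :
  generates G ->
  ((forall X : obj K, left_dualizable X) \/ (forall X : obj K, right_dualizable X)) ->
  (Spc_noetherian K <-> fg_ideals_DCC K).
Proof.
move=> HG Hdual.
have semi : forall (I : obj K -> Prop) (B : obj K), thick_ideal I ->
    (forall X, I (tens (tens B X) B)) -> I B.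
  by move=> I B HI HX; apply: (semiprime HK Hdual HI HX).
split.
- move=> Hn I Hfg Hdesc.
  pose b n := proj1_sig (constructive_indefinite_description _ (fg_gen HK (Hfg n))).
  have Hb : forall n, [/\ thick_ideal (I n), I n (b n) &
      forall Q, thick_ideal Q -> Q (b n) -> forall X, I n X -> Q X].
    by move=> n; rewrite /b; case: constructive_indefinite_description.
  pose C n := fun P : obj K -> Prop => prime_ideal P /\ ~ P (b n).
  have Ccl : forall n, Spc_closed (C n).
    move=> n; split; first by move=> P [].
    by exists (fun A => A = b n) => P HP; split; [case=> _ H A -> | move=> H; split => //; apply: H].
  have Cdesc : forall n P, C n.+1 P -> C n P.
    move=> n P [HP nP]; split => // Pb; apply: nP.
    case: (Hb n) => _ _ H; apply: (H P (prime_ideal_i HP) Pb).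
    apply: Hdesc; by case: (Hb n.+1).
  case: (Hn C Ccl Cdesc) => N HN; exists N => n Hnn X IX.
  apply: NNPP => nX.
  case: (Hb n) => TIn Ibn Hgen.
  case: (prime_exists HK semi TIn nX) => P [HP IP nPX].
  have CN : C N P.
    split => // PbN; apply: nPX; case: (Hb N) => _ _ H.
    exact: (H P (prime_ideal_i HP) PbN X IX).
  by case: (HN n Hnn P CN) => _; apply; apply: IP.
- move=> Hdcc C Ccl Cdesc.
  have HB : forall n, exists B, forall P, prime_ideal P -> (C n P <-> ~ P B).
    move=> n; exact: (closed_support HK HG Hdcc (Ccl n)).
  pose B n := proj1_sig (constructive_indefinite_description _ (HB n)).
  have HBn : forall n P, prime_ideal P -> (C n P <-> ~ P (B n)).
    by move=> n; rewrite /B; case: constructive_indefinite_description.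
  have [N HN] : exists N, forall n, (N <= n)%N -> forall P, prime_ideal P ->
      ~ P (B N) -> ~ P (B n).
    apply: (dcc_supports HK HG Hdcc) => n P HP H.
    by apply/(HBn n P HP); apply: Cdesc; apply/(HBn n.+1 P HP).
  exists N => n Hnn P CP.
  have HP : prime_ideal P by case: (Ccl N) => H _; apply: H.
  apply/(HBn n P HP); apply: (HN n Hnn P HP); exact/(HBn N P HP).
Qed.
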